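(* Let $m\ge2$. For every $P_0\in\mathfrak P$ and every neighborhood $\mathcal O\subseteq\mathbb R^{nm\times n}$ of $P_0$ there exist $P_1,P_2\in\mathcal O\cap\mathfrak P$ such that $\operatorname{rank}[E-\gamma P_1,\ E-\gamma P_2]=2n-1$; equivalently, $$\operatorname{span}(E-\gamma P_1)\cap\operatorname{span}(E-\gamma P_2)=\operatorname{span}(\mathbf 1_{nm}).$$
   Context: $n,m\ge1$ integers, $\gamma\in(0,1)$. $\mathfrak P$ is the set of matrices $P\in\mathbb R^{nm\times n}$ with nonnegative entries and rows summing to one (rows indexed by state-action pairs ordered as $(s_1,a_1),\dots,(s_n,a_1),(s_1,a_2),\dots,(s_n,a_m)$). $E=[I_n,\dots,I_n]^\top\in\mathbb R^{nm\times n}$. $\operatorname{span}(B)$ denotes the column span of $B$; $\mathbf 1_{nm}$ is the all-ones vector. *)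

(* Defs.v *)
From HB Require Import structures.
From mathcomp Require Import all_boot all_order all_algebra.
From mathcomp Require Import all_classical all_reals all_analysis.
Set Implicit Arguments. Unset Strict Implicit. Unset Printing Implicit Defensive.
Import Order.TTheory GRing.Theory Num.Theory.
Import numFieldNormedType.Exports.
Local Open Scope ring_scope.

(* Row k : 'I_(n*m) encodes the state-action pair (s_{k mod n}, a_{k div n}),
   matching the ordering (s_1,a_1),...,(s_n,a_1),(s_1,a_2),...,(s_n,a_m). *)

Definition stochastic (R : realType) (n m : nat) (P : 'M[R]_(n * m, n)) : Prop :=
  (forall k i, 0 <= P k i) /\ (forall k, \sum_(i < n) P k i = 1).

(* E = [I_n, ..., I_n]^T (m copies stacked vertically). *)
Definition Emx (R : realType) (n m : nat) : 'M[R]_(n * m, n) :=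
  \matrix_(k < n * m, i < n) ((k %% n)%N == i)%:R.

(* Main.v *)
Require Import Defs.
From HB Require Import structures.
From mathcomp Require Import all_boot all_order all_algebra.
From mathcomp Require Import all_classical all_reals all_analysis.
From mathcomp Require Import ring lra zify.
Import Order.TTheory GRing.Theory Num.Theory.
Import numFieldNormedType.Exports.
Local Open Scope ring_scope.

Lemma fix0 (R : realType) n (g : R) (p : 'I_n -> 'I_n -> R) (z : 'I_n -> R) :
  0 <= g -> g < 1 -> (forall j i, 0 <= p j i) -> (forall j, \sum_i p j i = 1) ->
  (forall j, z j = g * \sum_i p j i * z i) -> forall j, z j = 0.
Proof.
move=> g0 g1 p0 p1 hz.
set M := \big[Num.max/0]_i `|z i|.
have hM : forall i, `|z i| <= M by move=> i; exact: le_bigmax.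
have M0 : 0 <= M by rewrite /M bigmax_idl le_max lexx.
have hMg : M <= g * M.
  apply: bigmax_le; first by rewrite mulr_ge0.
  move=> j _; rewrite hz normrM ger0_norm //; apply: ler_wpM2l => //.
  apply: le_trans (ler_norm_sum _ _ _) _.
  rewrite -[M]mul1r -(p1 j) mulr_suml; apply: ler_sum => i _.
  by rewrite normrM ger0_norm // ler_wpM2l.
have MM : M <= 0 by nra.
move=> j; apply/normr0_eq0/eqP; rewrite eq_le normr_ge0 andbT.
exact: le_trans (hM j) MM.
Qed.

Lemma sum_ind (R : realType) n (x : 'I_n -> R) k (hk : (k < n)%N) :
  \sum_(i < n) x i * (k == i)%:R = x (Ordinal hk).
Proof.
rewrite (bigD1 (Ordinal hk)) //= eqxx mulr1 big1 ?addr0 // => i hi.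
rewrite (_ : (k == i) = false) ?mulr0 //; apply/negbTE; apply: contra hi => /eqP ki.
by apply/eqP/val_inj => /=; rewrite ki.
Qed.

Definition P1f (R : realType) n m (eps : R) (P0 : 'M[R]_(n * m, n)) : 'M[R]_(n * m, n) :=
  \matrix_(k, i) if (k %/ n == 1)%N then (1-eps) * P0 k i + eps / n%:R else P0 k i.
Definition P2f (R : realType) n m (eps : R) (P0 : 'M[R]_(n * m, n)) : 'M[R]_(n * m, n) :=
  \matrix_(k, i) if (k %/ n == 1)%N then (1-eps) * P0 k i + eps * ((k %% n)%N == i)%:R else P0 k i.

Arguments P1f {R n m}.
Arguments P2f {R n m}.

Lemma Arow (R : realType) n m g (P : 'M[R]_(n * m, n)) (x : 'I_n -> R) k (hn : (0 < n)%N) :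
  \sum_i x i * (Emx R n m - g *: P) k i = x (Ordinal (ltn_pmod k hn)) - g * \sum_i x i * P k i.
Proof.
under eq_bigr do rewrite !mxE mulrBr.
rewrite sumrB (@sum_ind _ _ x _ (ltn_pmod k hn)); congr (_ - _). rewrite mulr_sumr; apply: eq_bigr => i _; ring.
Qed.

Lemma mulAT (R : realType) n m (A1 A2 : 'M[R]_(n * m, n)) (u : 'rV[R]_(n + n)) k :
  (u *m (row_mx A1 A2)^T) 0 k =
  \sum_i u 0 (lshift n i) * A1 k i + \sum_i u 0 (rshift n i) * A2 k i.
Proof.
rewrite !mxE big_split_ord /=.
by congr (_ + _); apply: eq_bigr => i _; rewrite mxE ?row_mxEl ?row_mxEr.
Qed.

Lemma kerP (R : realType) n m (A1 A2 : 'M[R]_(n * m, n)) (u : 'rV[R]_(n+n)) :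
  u *m (row_mx A1 A2)^T = 0 ->
  forall k, \sum_i u 0 (lshift n i) * A1 k i + \sum_i u 0 (rshift n i) * A2 k i = 0.
Proof.
move=> /rowP H k; have := H k; rewrite !mxE big_split_ord /= => HH; apply: etrans HH.
by congr (_ + _);  apply: eq_bigr => i _; rewrite mxE ?row_mxEl ?row_mxEr.
Qed.

Lemma row0P n m (hm : (2 <= m)%N) (j : 'I_n) : (j < n * m)%N.
Proof. have := ltn_ord j; nia. Qed.
Lemma row1P n m (hm : (2 <= m)%N) (j : 'I_n) : (n + j < n * m)%N.
Proof. have := ltn_ord j; nia. Qed.
Arguments row0P {n m}.
Arguments row1P {n m}.

Lemma kerC (R : realType) n m (g eps : R) (P0 : 'M[R]_(n * m, n))
  (hn : (0 < n)%N) (hm : (2 <= m)%N) (g0 : 0 < g) (g1 : g < 1) (e0 : 0 < eps)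
  (hP : stochastic P0) (u : 'rV[R]_(n + n)) :
  u *m (row_mx (Emx R n m - g *: P1f eps P0) (Emx R n m - g *: P2f eps P0))^T = 0 ->
  exists c, u = c *: row_mx (const_mx 1 : 'rV[R]_n) (const_mx (-1)).
Proof.
move=> /kerP H.
pose x : 'I_n -> R := fun i => u 0 (lshift n i).
pose y : 'I_n -> R := fun i => u 0 (rshift n i).
have Hk (k : 'I_(n * m)) : x (Ordinal (ltn_pmod k hn)) - g * \sum_i x i * P1f eps P0 k i
   + (y (Ordinal (ltn_pmod k hn)) - g * \sum_i y i * P2f eps P0 k i) = 0.
  by rewrite -(@Arow _ _ _ _ _ x k hn) -(@Arow _ _ _ _ _ y k hn); exact: H.
have ordE (k : 'I_(n * m)) (j : 'I_n) : (k %% n)%N = j -> Ordinal (ltn_pmod k hn) = j.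
  by move=> e; apply: val_inj.
have z0 : forall j, x j + y j = 0.
  apply: (@fix0 R n g (fun j i => P0 (Ordinal (row0P hm j)) i) (fun j => x j + y j)) => //.
  - exact: ltW.
  - by move=> j i; case: hP.
  - by move=> j; case: hP.
  move=> j; have := Hk (Ordinal (row0P hm j)).
  have dj : ((j : nat) %/ n = 0)%N by rewrite divn_small.
  have mj : ((j : nat) %% n = j)%N by rewrite modn_small.
  rewrite (ordE (Ordinal (row0P hm j)) j mj).
  under eq_bigr do rewrite mxE /= dj /=.
  under [X in _ + (_ - _ * X)]eq_bigr do rewrite mxE /= dj /=.
  rewrite mulr_sumr.
  move=> HH.
  have : x j + y j = g * (\sum_i x i * P0 (Ordinal (row0P hm j)) i + \sum_i y i * P0 (Ordinal (row0P hm j)) i) by lra.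
  move=> ->; rewrite -big_split /= mulr_sumr; apply: eq_bigr => i _; ring.
have yE i : y i = - x i by have := z0 i; lra.
have xE j : x j = (\sum_i x i) / n%:R.
  have := Hk (Ordinal (row1P hm j)).
  have dj : ((n + j) %/ n = 1)%N by rewrite -{1}(mul1n n) divnMDl // divn_small.
  have mj : ((n + j) %% n = j)%N by rewrite modnDl modn_small.
  rewrite (ordE (Ordinal (row1P hm j)) j mj) yE.
  under eq_bigr do rewrite mxE /= dj /=.
  under [X in _ + (_ - _ * X)]eq_bigr do rewrite yE mxE /= dj /= mj.
  set k1 := Ordinal (row1P hm j).
  set T := \sum_i x i * P0 k1 i.
  have s1 : \sum_i x i * ((1 - eps) * P0 k1 i + eps / n%:R)
      = (1 - eps) * T + (\sum_i x i) * (eps / n%:R).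
    rewrite (eq_bigr (fun i => (1 - eps) * (x i * P0 k1 i) + x i * (eps / n%:R))); last by move=> i _; ring.
    by rewrite big_split /= -mulr_sumr -mulr_suml -/T.
  have s2 : \sum_i - x i * ((1 - eps) * P0 k1 i + eps * (j == i)%:R)
      = - ((1 - eps) * T + eps * x j).
    rewrite (eq_bigr (fun i => - (1 - eps) * (x i * P0 k1 i) + - eps * (x i * (j == i)%:R))); last by move=> i _; ring.
    rewrite big_split /= -!mulr_sumr (@sum_ind _ _ x _ (ltn_ord j)).
    have -> : Ordinal (ltn_ord j) = j by apply: val_inj.
    rewrite -/T; ring.
  rewrite s1 s2 => HH.
  have : (g * eps) * (x j - (\sum_i x i) / n%:R) = 0 by apply: etrans HH; ring.
  move/eqP; rewrite mulf_eq0 mulf_eq0 (gt_eqF g0) (gt_eqF e0) /= subr_eq0.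
  by move/eqP.
exists ((\sum_i x i) / n%:R).
rewrite -[u]hsubmxK scale_row_mx; congr row_mx; apply/rowP => i; rewrite !mxE.
  by rewrite mulr1; apply: xE.
by rewrite mulrN1; apply: (etrans (yE i)); rewrite xE.
Qed.

Lemma sum_ind1 (R : realType) n k (hk : (k < n)%N) :
  \sum_(i < n) (k == i)%:R = 1 :> R.
Proof.
transitivity (\sum_(i < n) (fun _ => 1 : R) i * (k == i)%:R).
  by apply: eq_bigr => i _; rewrite mul1r.
exact: sum_ind.
Qed.

Lemma Esum (R : realType) n m g (P : 'M[R]_(n * m, n)) k (hn : (0 < n)%N) :
  stochastic P -> \sum_i (Emx R n m - g *: P) k i = 1 - g.
Proof.
move=> [_ hP].
transitivity (\sum_i (fun _ => 1 : R) i * (Emx R n m - g *: P) k i).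
  by apply: eq_bigr => i _; rewrite mul1r.
rewrite (@Arow R n m g P (fun=> 1) k hn) /=; under eq_bigr do rewrite mul1r.
by rewrite hP mulr1.
Qed.

Lemma stoch1 (R : realType) n m (eps : R) (P0 : 'M[R]_(n * m, n)) (hn : (0 < n)%N) :
  0 <= eps -> eps <= 1 -> stochastic P0 -> stochastic (P1f eps P0).
Proof.
move=> e0 e1 [hP0 hP1]; split.
  move=> k i; rewrite mxE; case: ifP => _ //.
  by apply: addr_ge0; [apply: mulr_ge0; rewrite ?subr_ge0 | apply: divr_ge0].
move=> k; under eq_bigr do rewrite mxE.
case: (k %/ n == 1)%N; last exact: hP1.
rewrite big_split /= -mulr_sumr hP1 mulr1 sumr_const card_ord -[_ *+ n]mulr_natr divfK.
  by ring.
by rewrite pnatr_eq0 -lt0n.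
Qed.

Lemma stoch2 (R : realType) n m (eps : R) (P0 : 'M[R]_(n * m, n)) (hn : (0 < n)%N) :
  0 <= eps -> eps <= 1 -> stochastic P0 -> stochastic (P2f eps P0).
Proof.
move=> e0 e1 [hP0 hP1]; split.
  move=> k i; rewrite mxE; case: ifP => _ //.
  by apply: addr_ge0; apply: mulr_ge0; rewrite ?subr_ge0.
move=> k; under eq_bigr do rewrite mxE.
case: (k %/ n == 1)%N; last exact: hP1.
rewrite big_split /= -!mulr_sumr hP1 (@sum_ind1 R n _ (ltn_pmod k hn)).
by ring.
Qed.

Lemma rankC (R : realType) n m (g eps : R) (P0 : 'M[R]_(n * m, n))
  (hn : (0 < n)%N) (hm : (2 <= m)%N) (g0 : 0 < g) (g1 : g < 1) (e0 : 0 < eps) (e1 : eps <= 1)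
  (hP : stochastic P0) :
  \rank (row_mx (Emx R n m - g *: P1f eps P0) (Emx R n m - g *: P2f eps P0)) = (2 * n - 1)%N.
Proof.
set A := row_mx _ _.
have hK : \rank (kermx A^T) = 1%N.
  pose w : 'rV[R]_(n + n) := row_mx (const_mx 1) (const_mx (-1)).
  have w0 : w != 0.
    apply/eqP => /matrixP/(_ 0 (lshift n (Ordinal hn))).
    by rewrite /w row_mxEl !mxE; apply/eqP; rewrite oner_eq0.
  have wK : (w <= kermx A^T)%MS.
    apply/sub_kermxP/rowP => k; rewrite mulAT mxE.
    under eq_bigr do rewrite /w row_mxEl mxE mul1r.
    under [X in _ + X]eq_bigr do rewrite /w row_mxEr mxE mulN1r.
    rewrite sumrN !Esum ?subrr //.
    all: try (apply: stoch1 => //; exact: ltW).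
    all: try (apply: stoch2 => //; exact: ltW).
  have Kw : (kermx A^T <= w)%MS.
    apply/row_subP => i; apply/sub_rVP.
    apply: (@kerC _ _ _ _ _ _ hn hm g0 g1 e0 hP); apply/sub_kermxP; exact: row_sub.
  apply/eqP; rewrite eqn_leq.
  have := mxrankS Kw; have := mxrankS wK; rewrite rank_rV w0 => -> ->.
  done.
have := mxrank_ker A^T; rewrite hK mxrank_tr.
have := rank_leq_col A; lia.
Qed.

Lemma le1 (R : realType) n m (P : 'M[R]_(n * m, n)) k i : stochastic P -> P k i <= 1.
Proof.
move=> [h0 h1]; rewrite -(h1 k) (bigD1 i) //= lerDl; exact: sumr_ge0.
Qed.

Lemma ballmx (R : realType) a b (P Q : 'M[R]_(a, b)) e :
  0 < e -> (forall i j, `|P i j - Q i j| < e) -> ball P e Q.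
Proof. by move=> e0 H; split. Qed.

Lemma pert (R : realType) (a b eps e : R) : 0 <= a -> a <= 1 -> 0 <= b -> b <= eps -> 0 < eps -> eps < e ->
  `|a - ((1 - eps) * a + b)| < e.
Proof.
move=> a0 a1 b0 be e0 ee.
have h1 : 0 <= (1 - a) * eps by apply: mulr_ge0; lra.
have h2 : 0 <= a * eps by apply: mulr_ge0; lra.
rewrite ltr_norml; apply/andP; split; lra.
Qed.

Theorem mainTheorem16 (R : realType) (n m : nat) (gamma : R)
  (hn : (1 <= n)%N) (hm : (2 <= m)%N) (hg0 : 0 < gamma) (hg1 : gamma < 1)
  (P0 : 'M[R]_(n * m, n)) (hP0 : stochastic P0)
  (O : set 'M[R]_(n * m, n)) (hO : nbhs P0 O) :
  exists P1 P2 : 'M[R]_(n * m, n),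
    [/\ O P1, stochastic P1, O P2, stochastic P2 &
        \rank (row_mx (Emx R n m - gamma *: P1) (Emx R n m - gamma *: P2))
          = (2 * n - 1)%N].
Proof.
move/nbhs_ballP: hO => [e /= e0 he].
pose eps := Num.min (e / 2) 1.
have eps0 : 0 < eps by rewrite /eps lt_min; apply/andP; split; lra.
have eps1 : eps <= 1 by rewrite /eps ge_min; apply/orP; right.
have epse : eps < e by rewrite /eps gt_min; apply/orP; left; lra.
have n1 : (1 <= n%:R :> R) by rewrite ler1n.
exists (P1f eps P0), (P2f eps P0); split.
- apply: he; apply: ballmx => // k i; rewrite mxE; case: ifP => _.
    apply: pert => //; [by case: hP0 | exact: le1 | apply: divr_ge0; lra | ].
    by rewrite ler_pdivrMr ?(lt_le_trans ltr01 n1) //; nra.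
  by rewrite subrr normr0.
- by apply: stoch1 => //; exact: ltW.
- apply: he; apply: ballmx => // k i; rewrite mxE; case: ifP => _.
    apply: pert => //; [by case: hP0 | exact: le1 | | ];
      by case: (_ == _); rewrite ?mulr1 ?mulr0; lra.
  by rewrite subrr normr0.
- by apply: stoch2 => //; exact: ltW.
- exact: rankC.
Qed.
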